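(* Let $L$ be an $R_0$-algebra and $k\in[0,1)$. If $\mu$ is an $(\in,\in\vee q_k)$-fuzzy fated filter of $L$, then for every $t\in(\tfrac{1-k}{2},1]$ the set $Q_k(\mu;t)=\{x\in L\mid \mu(x)+t+k>1\}$ is either empty or a fated filter of $L$.
   Context: An $R_0$-algebra is a bounded distributive lattice $(L,\wedge,\vee,0,1)$ with an order-reversing involution $\neg$ and a binary operation $\to$ such that for all $x,y,z\in L$: $x\to y=\neg y\to\neg x$; $1\to x=x$; $(y\to z)\wedge((x\to y)\to(x\to z))=y\to z$; $x\to(y\to z)=y\to(x\to z)$; $x\to(y\vee z)=(x\to y)\vee(x\to z)$; $(x\to y)\vee((x\to y)\to(\neg x\vee y))=1$. A fated filter of $L$ is a nonempty subset $A\subseteq L$ with $1\in A$ such that for all $x,y\in L$ and $a\in A$, $a\to((x\to y)\to x)\in A$ implies $x\in A$. For $x\in L$, $t\in(0,1]$ and a fuzzy subset $\mu:L\to[0,1]$: $x_t\in\mu$ iff $\mu(x)\ge t$; $x_t\,q_k\,\mu$ iff $\mu(x)+t+k>1$; $x_t\in\vee q_k\,\mu$ iff $x_t\in\mu$ or $x_t\,q_k\,\mu$. $\mu$ is an $(\in,\in\vee q_k)$-fuzzy fated filter of $L$ if (1) for all $x\in L$, $t\in(0,1]$: $x_t\in\mu\Rightarrow 1_t\in\vee q_k\,\mu$; and (2) for all $x,a,y\in L$, $t,s\in(0,1]$: if $(a\to((x\to y)\to x))_t\in\mu$ and $a_s\in\mu$ then $x_{\min\{t,s\}}\in\vee q_k\,\mu$.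 *)

(* Defs.v *)
From Stdlib Require Import Reals.
Open Scope R_scope.

Record R0_algebra := {
  car :> Type;
  meet : car -> car -> car;
  join : car -> car -> car;
  bot : car;
  top : car;
  neg : car -> car;
  imp : car -> car -> car;
  meetC : forall x y, meet x y = meet y x;
  joinC : forall x y, join x y = join y x;
  meetA : forall x y z, meet x (meet y z) = meet (meet x y) z;
  joinA : forall x y z, join x (join y z) = join (join x y) z;
  meet_absorb : forall x y, meet x (join x y) = x;
  join_absorb : forall x y, join x (meet x y) = x;
  meet_distr : forall x y z, meet x (join y z) = join (meet x y) (meet x z);
  join_bot : forall x, join x bot = x;
  meet_top : forall x, meet x top = x;
  (* neg is an order-reversing involution (x <= y iff meet x y = x) *)
  neg_invol : forall x, neg (neg x) = x;
  neg_antitone : forall x y, meet x y = x -> meet (neg y) (neg x) = neg y;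
  R1 : forall x y, imp x y = imp (neg y) (neg x);
  R2 : forall x, imp top x = x;
  R3 : forall x y z, meet (imp y z) (imp (imp x y) (imp x z)) = imp y z;
  R4 : forall x y z, imp x (imp y z) = imp y (imp x z);
  R5 : forall x y z, imp x (join y z) = join (imp x y) (imp x z);
  R6 : forall x y, join (imp x y) (imp (imp x y) (join (neg x) y)) = top
}.

Arguments imp {r}.
Arguments top {r}.

Definition fated_filter (L : R0_algebra) (A : L -> Prop) : Prop :=
  (exists z, A z) /\ A top /\
  forall x y a : L, A a -> A (imp a (imp (imp x y) x)) -> A x.

Definition fin (L : R0_algebra) (mu : L -> R) (x : L) (t : R) : Prop := mu x >= t.
Definition fq (k : R) (L : R0_algebra) (mu : L -> R) (x : L) (t : R) : Prop :=
  mu x + t + k > 1.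
Definition fin_or_q (k : R) (L : R0_algebra) (mu : L -> R) (x : L) (t : R) : Prop :=
  fin L mu x t \/ fq k L mu x t.

Definition fuzzy_subset (L : R0_algebra) (mu : L -> R) : Prop :=
  forall x, 0 <= mu x <= 1.

Definition in_inq_fuzzy_fated_filter (k : R) (L : R0_algebra) (mu : L -> R) : Prop :=
  fuzzy_subset L mu /\
  (forall (x : L) (t : R), 0 < t <= 1 -> fin L mu x t -> fin_or_q k L mu top t) /\
  (forall (x a y : L) (t s : R), 0 < t <= 1 -> 0 < s <= 1 ->
     fin L mu (imp a (imp (imp x y) x)) t -> fin L mu a s ->
     fin_or_q k L mu x (Rmin t s)).

Definition Qk (k : R) (L : R0_algebra) (mu : L -> R) (t : R) : L -> Prop :=
  fun x => fq k L mu x t.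

(* Main.v *)
Require Import Defs.
From Stdlib Require Import Reals.
From Stdlib Require Import Lra Classical.
Open Scope R_scope.

Theorem theorem3p20 (L : R0_algebra) (k : R) (mu : L -> R) :
  0 <= k < 1 ->
  in_inq_fuzzy_fated_filter k L mu ->
  forall t : R, (1 - k) / 2 < t <= 1 ->
    (forall x : L, ~ Qk k L mu t x) \/ fated_filter L (Qk k L mu t).
Proof.
  intros Hk [Hf [H1 H2]] t Ht.
  destruct (classic (exists z, Qk k L mu t z)) as [[z Hz]|Hn].
  2:{ left. intros x Hx. apply Hn. exists x. exact Hx. }
  right. unfold Qk, fq in *. split; [exists z; exact Hz|]. split.
  - destruct (Rle_lt_dec (mu top + t + k) 1) as [Hc|Hc]; [|lra].
    exfalso.
    pose proof (Hf top) as Ht0. pose proof (Hf z) as Hz0.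
    set (r := Rmin (mu z) ((1 - k)/2)).
    assert (Hr1 : r <= mu z) by apply Rmin_l.
    assert (Hr2 : r <= (1-k)/2) by apply Rmin_r.
    assert (Hr3 : mu top < r).
    { unfold r. apply Rmin_glb_lt; lra. }
    destruct (H1 z r) as [Ha|Ha]; unfold fin, fq in *; try lra.
  - intros x y a Ha Hb.
    destruct (Rle_lt_dec (mu x + t + k) 1) as [Hc|Hc]; [|lra].
    exfalso.
    pose proof (Hf x) as Hx0.
    set (b := imp a (imp (imp x y) x)) in *.
    set (r := Rmin (Rmin (mu a) (mu b)) ((1 - k)/2)).
    assert (Hr1 : r <= Rmin (mu a) (mu b)) by apply Rmin_l.
    assert (Hr2 : r <= (1-k)/2) by apply Rmin_r.
    assert (Hra : Rmin (mu a) (mu b) <= mu a) by apply Rmin_l.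
    assert (Hrb : Rmin (mu a) (mu b) <= mu b) by apply Rmin_r.
    assert (Hr3 : mu x < r).
    { unfold r. apply Rmin_glb_lt; [apply Rmin_glb_lt|]; lra. }
    pose proof (Hf a). pose proof (Hf b).
    assert (Hrr : Rmin r r = r) by (apply Rmin_left; lra).
    assert (Hbr : mu (imp a (imp (imp x y) x)) >= r) by (fold b; lra).
    assert (Hr0 : 0 < r <= 1) by lra.
    assert (Har : mu a >= r) by lra.
    destruct (H2 x a y r r Hr0 Hr0 Hbr Har) as [Hd|Hd];
      unfold fin, fq in Hd; rewrite Hrr in Hd; lra.
Qed.
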